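(* Let $P\subset\mathcal O_W$ be a binomial ideal and let $\xi\in W$ be a point where $\mathrm{Eord}_\xi(P)=\theta>0$ is maximal. Let $Z=\bigcap_{i\in\mathcal I}\{x_i=0\}\subset\mathrm{Etop}(P)$, $\mathcal I\subseteq\{1,\dots,n\}$, and let $\pi:W'\to W$ be the blow-up along $Z$, with exceptional divisor $Y'$. Write the total transform as $P\mathcal O_{W'}=I(Y')^{\theta}\cdot P^{\vee}$ ($P^\vee$ the weak transform). Then $\mathrm{Eord}_\xi(P)\ge\mathrm{Eord}_{\xi'}(P^{\vee})$ for all $\xi'\in W'$ with $\pi(\xi')=\xi$.
   Context: $K$ is an algebraically closed field of arbitrary characteristic; $W=\mathrm{Spec}(K[x_1,\dots,x_s,y_1,\dots,y_{n-s}]_y)$ (localization at $y_1\cdots y_{n-s}$), $E\cap W=\{V(x_1),\dots,V(x_s)\}$. For $\xi$ let $\Lambda(\xi)=\{i:\xi\in V(x_i)\}$, $E^0_{\Lambda(\xi)}$ the stratum of points lying on $V(x_i)$ exactly for $i\in\Lambda(\xi)$ (ideal generated by these $x_i$), $\mathrm{Eord}_\xi(J)=\max\{m: J_\xi\subset(I(E^0_{\Lambda(\xi)})_\xi)^m\}$. $\mathrm{Etop}(P)$ is the set of points where $\mathrm{Eord}(P)$ attains its maximum. On $W'$ the $E$-order is taken with respect to $E'$, consisting of the strict transforms of the hypersurfaces of $E$ and $Y'$; in the chart where one divides by $x_j$ the coordinates are $x_j$, $x_i'=x_i/x_j$ ($i\in\mathcal I$, $i\ne j$) and the remaining variables. A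 binomial ideal is an ideal generated by elements $x^{\lambda}(1-\mu y^{\delta})$ or $x^{\nu}(y^{\gamma}x^{\alpha}-bx^{\beta})$ with $\lambda,\nu,\alpha,\beta\in\mathbb N^s$, $\gamma,\delta\in\mathbb Z^{n-s}$, $\mu,b\in K$, each $y^\gamma x^\alpha-bx^\beta$ without common factors and $0<|\alpha|\le|\beta|$. *)

(* Defs.v *)
From mathcomp Require Import all_boot all_algebra.
From mathcomp Require Import mpoly.
Set Implicit Arguments. Unset Strict Implicit. Unset Printing Implicit Defensive.
Import GRing.Theory.
Local Open Scope ring_scope.

(* Coordinates: the polynomial ring K[x_1..x_s, y_1..y_t] (t = n - s) is
   {mpoly K[s + t]};  x_i = 'X_(lshift t i), y_j = 'X_(rshift s j).
   O_W is its localization at y_1...y_t; ideals of O_W are represented by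
   ideals (or generating sets) of the polynomial ring, and points of W by
   prime ideals of the polynomial ring not containing y_1...y_t. *)
Notation PR K s t := {mpoly K[s + t]}.

Definition xv (K : closedFieldType) (s t : nat) (i : 'I_s) : PR K s t :=
  'X_(lshift t i).
Definition yv (K : closedFieldType) (s t : nat) (j : 'I_t) : PR K s t :=
  'X_(rshift s j).
Definition yprod (K : closedFieldType) (s t : nat) : PR K s t :=
  \prod_(j < t) yv K s j.

Definition xmon (K : closedFieldType) (s t : nat) (a : 'I_s -> nat) : PR K s t :=
  \prod_(i < s) xv K t i ^+ a i.
Definition ymon (K : closedFieldType) (s t : nat) (d : 'I_t -> nat) : PR K s t :=
  \prod_(j < t) yv K s j ^+ d j.

Definition genI (R : comNzRingType) (S : R -> Prop) : R -> Prop :=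
  fun f => exists (k : nat) (g c : 'I_k -> R),
    (forall i, S (g i)) /\ f = \sum_(i < k) c i * g i.

Definition powI (R : comNzRingType) (S : R -> Prop) (m : nat) : R -> Prop :=
  genI (fun f => exists g : 'I_m -> R,
          (forall i, genI S (g i)) /\ f = \prod_(i < m) g i).

Definition is_ideal (R : comNzRingType) (p : R -> Prop) : Prop :=
  p 0 /\ (forall a b, p a -> p b -> p (a + b)) /\ (forall r a, p a -> p (r * a)).

Definition is_prime (R : comNzRingType) (p : R -> Prop) : Prop :=
  is_ideal p /\ ~ p 1 /\ (forall a b, p (a * b) -> p a \/ p b).

Definition pointW (K : closedFieldType) (s t : nat) (p : PR K s t -> Prop) : Prop :=
  is_prime p /\ ~ p (yprod K s t).

Definition IE (K : closedFieldType) (s t : nat) (p : PR K s t -> Prop) :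
  PR K s t -> Prop :=
  genI (fun f => exists i : 'I_s, p (xv K t i) /\ f = xv K t i).

(* J_xi  is contained in  (I(E^0_{Lambda(xi)})_xi)^m  (in the local ring at xi),
   i.e.  Eord_xi(J) >= m. *)
Definition Eord_ge (K : closedFieldType) (s t : nat) (p : PR K s t -> Prop)
    (J : PR K s t -> Prop) (m : nat) : Prop :=
  forall f, J f -> exists g, ~ p g /\ powI (IE p) m (g * f).

Definition Eord_eq (K : closedFieldType) (s t : nat) (p : PR K s t -> Prop)
    (J : PR K s t -> Prop) (m : nat) : Prop :=
  Eord_ge p J m /\ ~ Eord_ge p J m.+1.

(* equality of the ideals generated in the localization at y_1...y_t *)
Definition yequiv (K : closedFieldType) (s t : nat) (A B : PR K s t -> Prop) : Prop :=
  (forall f, A f -> exists k, B (yprod K s t ^+ k * f)) /\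
  (forall f, B f -> exists k, A (yprod K s t ^+ k * f)).

(* binomial generators (up to units y-monomials, Laurent y-monomials y^delta
   being written y^d / y^e with d e in N^t):
   x^lambda (1 - mu y^delta)   ~  x^lambda (y^e - mu y^d)
   x^nu (y^gamma x^alpha - b x^beta)  ~  x^nu (y^d x^alpha - b y^e x^beta)
   with y^gamma x^alpha, b x^beta without common factors (no x_i divides both
   monomials) and 0 < |alpha| <= |beta|. *)
Definition binomial_gen (K : closedFieldType) (s t : nat) (f : PR K s t) : Prop :=
  (exists (lam : 'I_s -> nat) (d e : 'I_t -> nat) (mu : K),
     f = xmon K t lam * (ymon K s e - mu *: ymon K s d)) \/
  (exists (nu al be : 'I_s -> nat) (d e : 'I_t -> nat) (b : K),
     f = xmon K t nu * (ymon K s d * xmon K t al - b *: (ymon K s e * xmon K t be))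
     /\ (forall i, al i = 0%N \/ be i = 0%N)
     /\ (0 < \sum_(i < s) al i)%N
     /\ (\sum_(i < s) al i <= \sum_(i < s) be i)%N).

(* the ring map O_W -> O_{W'_j} of the j-th chart of the blow-up along
   Z = {x_i = 0, i in Iset}:  x_i |-> x_j x_i' (i in Iset, i <> j),
   all other variables fixed. *)
Definition chart_var (K : closedFieldType) (s t : nat) (Iset : {set 'I_s}) (j : 'I_s)
    (k : 'I_(s + t)) : PR K s t :=
  if [exists i in Iset, (i != j) && (k == lshift t i)]
  then xv K t j * 'X_k else 'X_k.

Definition chart_map (K : closedFieldType) (s t : nat) (Iset : {set 'I_s}) (j : 'I_s)
    (f : PR K s t) : PR K s t :=
  comp_mpoly [tuple chart_var K Iset j k | k < s + t] f.

(* Main.v *)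
Require Import Defs.
From mathcomp Require Import all_boot all_algebra.
From mathcomp Require Import mpoly.
From Stdlib Require Import ClassicalDescription.
From mathcomp Require Import zify.
Set Implicit Arguments. Unset Strict Implicit.
Import GRing.Theory.
Local Open Scope ring_scope.
Section S.
Variables (K : closedFieldType) (s t : nat).
Local Notation R := {mpoly K[s + t]}.
Variable L : pred 'I_s.
Definition eL (k : 'I_(s+t)) : nat := [exists i : 'I_s, L i && (k == lshift t i)].
Definition wL (m : 'X_{1..s+t}) : nat := (\sum_(k < s + t) eL k * m k)%N.
Fact phi_key : unit. Proof. exact: tt. Qed.
Definition phi (p : R) : {poly R} := locked_with phi_key
  (mmap (polyC \o @mpolyC (s+t) K) (fun k => ('X_k)%:P * 'X ^+ eL k)) p.
Lemma phiM p q : phi (p * q) = phi p * phi q.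
Proof. by rewrite /phi unlock rmorphM. Qed.
Lemma phiD p q : phi (p + q) = phi p + phi q.
Proof. by rewrite /phi unlock rmorphD. Qed.

Lemma phiE p : phi p = \sum_(m <- msupp p) (p@_m *: 'X_[m])%:P * 'X ^+ wL m.
Proof.
rewrite /phi unlock /mmap; apply: eq_bigr => m _ /=.
rewrite /mmap1 (eq_bigr (fun k => ('X_k ^+ m k)%:P * 'X ^+ (eL k * m k))); last first.
  by move=> k _; rewrite exprMn rmorphXn -exprM.
rewrite big_split /= prodrXr -rmorph_prod -mpolyXE_id -mul_mpolyC /= mulrA.
by rewrite -rmorphM.
Qed.

Lemma coef_phi p d m0 : ((phi p)`_d)@_m0 = if wL m0 == d then p@_m0 else 0.
Proof.
rewrite phiE coef_sum raddf_sum /=.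
rewrite (eq_bigr (fun m => if wL m == d then p@_m * (m == m0)%:R else 0)); last first.
  move=> m _; rewrite mul_polyC coefZ coefXn eq_sym.
  case: (wL m == d); last by rewrite mulr0 mcoeff0.
  by rewrite mulr1 mcoeffZ mcoeffX.
case: (boolP (m0 \in msupp p)) => Hm0.
  rewrite (bigD1_seq m0) ?msupp_uniq //= eqxx mulr1 big1 ?addr0; last first.
    by move=> m /negbTE ->; rewrite mulr0; case: ifP.
  by [].
rewrite big1_seq; last first.
  move=> m Hm; have -> : (m == m0) = false.
    by apply/negbTE; apply: contraNneq Hm0 => <-.
  by rewrite mulr0; case: ifP.
move: Hm0; rewrite mcoeff_msupp negbK => /eqP ->; by case: ifP.
Qed.

Definition Wt (p : R) (n : nat) := forall m, p@_m != 0 -> (n <= wL m)%N.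

Lemma WtP p n : Wt p n <-> forall d, (d < n)%N -> (phi p)`_d = 0.
Proof.
split.
  move=> H d Hd; apply/mpolyP => m0; rewrite coef_phi mcoeff0.
  case: eqP => // Hw; apply/eqP; apply: contraTT Hd => /H.
  by rewrite Hw -leqNgt.
move=> H m Hm; rewrite leqNgt; apply/negP => Hw.
move: (H _ Hw) => /mpolyP /(_ m); rewrite coef_phi eqxx mcoeff0 => Hm0.
by rewrite Hm0 eqxx in Hm.
Qed.

Lemma Wt_mul p q a b : Wt p a -> Wt q b -> Wt (p * q) (a + b).
Proof.
move=> /WtP Hp /WtP Hq; apply/WtP => d Hd; rewrite phiM coefM; apply: big1 => j _.
case: (ltnP j a) => Hj; first by rewrite (Hp j Hj) mul0r.
have Hb : (d - j < b)%N by move: (ltn_ord j) Hd Hj; rewrite ltnS => H1 H2 H3; lia.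
by rewrite (Hq _ Hb) mulr0.
Qed.

Lemma Wt_add p q a : Wt p a -> Wt q a -> Wt (p + q) a.
Proof.
move=> /WtP Hp /WtP Hq; apply/WtP => d Hd; by rewrite phiD coefD (Hp d Hd) (Hq d Hd) addr0.
Qed.

Lemma Wt_0 a : Wt 0 a.
Proof. by move=> m; rewrite mcoeff0 eqxx. Qed.

Lemma Wt_any p : Wt p 0.
Proof. by []. Qed.

Lemma Wt_le p a b : (a <= b)%N -> Wt p b -> Wt p a.
Proof. by move=> Hab H m /H; apply: leq_trans. Qed.

Lemma Wt_mulr r p a : Wt p a -> Wt (r * p) a.
Proof. move=> H; rewrite -[a]add0n; exact: Wt_mul. Qed.

Lemma Wt_cancel g f n : Wt (g * f) n -> (phi g)`_0 != 0 -> Wt f n.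
Proof.
move=> /WtP H Hg; apply/WtP => d; elim: d {-2}d (leqnn d) => [|D IH] d Hd Hdn.
  move: Hd; rewrite leqn0 => /eqP Hd; subst d.
  move: (H 0%N Hdn); rewrite phiM coefM big_ord1 subn0 => /eqP.
  by rewrite mulf_eq0 (negbTE Hg) /= => /eqP.
move: (H d Hdn); rewrite phiM coefM big_ord_recl /= subn0 big1 ?addr0.
  by move/eqP; rewrite mulf_eq0 (negbTE Hg) /= => /eqP.
move=> j _; rewrite IH ?mulr0 //.
  move: (ltn_ord j) Hd; rewrite /bump /=; lia.
move: Hdn; lia.
Qed.

Lemma phiX k : phi 'X_k = ('X_k)%:P * 'X ^+ eL k.
Proof. by rewrite /phi unlock mmapX mmap1U. Qed.

Lemma Wt_X k : Wt 'X_k (eL k).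
Proof.
apply/WtP => d Hd; rewrite phiX coefCM coefXn.
by rewrite (_ : (d == eL k) = false) ?mulr0 //; apply/negbTE; rewrite neq_ltn Hd.
Qed.

Lemma Wt_exp p a n : Wt p a -> Wt (p ^+ n) (n * a).
Proof.
move=> H; elim: n => [|n IH]; first by rewrite mul0n.
by rewrite exprS mulSn; apply: Wt_mul.
Qed.


Lemma eL_lshift i : eL (lshift t i) = L i.
Proof.
rewrite /eL; case: (boolP (L i)) => Hi.
  by rewrite (_ : [exists _, _] = true) //; apply/existsP; exists i; rewrite Hi eqxx.
rewrite (_ : [exists _, _] = false) //; apply/negbTE/existsP => [[i' /andP [Hi' /eqP E]]].
by move: E Hi' => /lshift_inj <-; rewrite (negbTE Hi).
Qed.

Lemma eL_neq0 k : eL k != 0%N -> exists2 i, L i & k = lshift t i.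
Proof.
rewrite /eL; case: (boolP [exists _, _]) => // /existsP [i /andP [Hi /eqP ->]] _.
by exists i.
Qed.

Lemma ideal_phi0 (P : R -> Prop) g : is_ideal P -> (forall i, L i -> P (xv K t i)) ->
  (phi g)`_0 = 0 -> P g.
Proof.
move=> [P0 [PD PM]] HL Hg.
have Hw : Wt g 1 by apply/WtP => d; rewrite ltnS leqn0 => /eqP ->.
rewrite (mpolyE g) big_seq; elim/big_rec: _ => // m x Hm Px; apply: (PD) => //.
rewrite -mul_mpolyC; apply: (PM).
move: (Hw m); rewrite -mcoeff_msupp => /(_ Hm) Hm1.
have [k Hk] : exists k, (eL k * m k != 0)%N.
  apply/existsP; apply: contraTT Hm1; rewrite negb_exists => /forallP H.
  rewrite -ltnNge ltnS leqn0 /wL; apply/eqP; apply: big1 => k _.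
  by move: (H k); rewrite negbK => /eqP.
move: Hk; rewrite muln_eq0 negb_or => /andP [He Hmk].
have [i Hi Ek] := eL_neq0 He.
rewrite mpolyXE_id (bigD1 k) //= -(prednK (n := m k)) ?lt0n // exprS -mulrA mulrC.
by apply: (PM); rewrite Ek; apply: HL.
Qed.

End S.

Section Gen.
Variable (R0 : comNzRingType).

Lemma genI_ind (S : R0 -> Prop) (Q : R0 -> Prop) f : Q 0 ->
  (forall a b, Q a -> Q b -> Q (a + b)) -> (forall r x, S x -> Q (r * x)) ->
  genI S f -> Q f.
Proof.
move=> Q0 QD QM [k [g [c [Hg ->]]]].
by elim/big_rec: _ => // i x _ Hx; apply: QD => //; apply: QM.
Qed.

Lemma genI_gen (S : R0 -> Prop) x : S x -> genI S x.
Proof.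
move=> Hx; exists 1%N, (fun _ => x), (fun _ => 1); split=> //.
by rewrite big_ord1 mul1r.
Qed.

Lemma genI_0 (S : R0 -> Prop) : genI S 0.
Proof. by exists 0%N, (fun _ => 0), (fun _ => 0); split => [[]//|]; rewrite big_ord0. Qed.

Lemma genI_add (S : R0 -> Prop) a b : genI S a -> genI S b -> genI S (a + b).
Proof.
move=> [k1 [g1 [c1 [Hg1 ->]]]] [k2 [g2 [c2 [Hg2 ->]]]].
exists (k1 + k2)%N, (fun i => match split i with inl u => g1 u | inr v => g2 v end),
  (fun i => match split i with inl u => c1 u | inr v => c2 v end); split.
  by move=> i; case: (split i).
rewrite big_split_ord /=; congr (_ + _); apply: eq_bigr => i _.
  by have -> : split (lshift k2 i) = inl i := unsplitK (inl _ i).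
by have -> : split (rshift k1 i) = inr i := unsplitK (inr _ i).
Qed.

Lemma genI_mul (S : R0 -> Prop) r a : genI S a -> genI S (r * a).
Proof.
move=> [k [g [c [Hg ->]]]]; exists k, g, (fun i => r * c i); split => //.
by rewrite mulr_sumr; apply: eq_bigr => i _; rewrite mulrA.
Qed.

Lemma genI_ideal (S : R0 -> Prop) : is_ideal (genI S).
Proof. split; [exact: genI_0|split; [exact: genI_add|exact: genI_mul]]. Qed.

Lemma powI_gen1 (S : R0 -> Prop) x : genI S x -> powI S 1 x.
Proof.
move=> Hx; apply: genI_gen; exists (fun _ => x); split => //.
by rewrite big_ord1.
Qed.

Lemma powI_0 (S : R0 -> Prop) x : powI S 0 x.
Proof.
rewrite -[x]mulr1; apply: genI_mul; apply: genI_gen.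
by exists (fun _ => 0); split => [[]//|]; rewrite big_ord0.
Qed.

Lemma powI_mul (S : R0 -> Prop) a b x y :
  powI S a x -> powI S b y -> powI S (a + b) (x * y).
Proof.
move=> Hx Hy; move: Hx; apply: (@genI_ind _ (fun u => powI S (a + b) (u * y))).
- by rewrite mul0r; apply: genI_0.
- by move=> u v Hu Hv; rewrite mulrDl; apply: genI_add.
move=> r u [g [Hg ->]]; rewrite -mulrA; apply: genI_mul.
move: Hy; apply: (@genI_ind _ (fun v => powI S (a + b) (\prod_(i < a) g i * v))).
- by rewrite mulr0; apply: genI_0.
- by move=> u1 v1 Hu Hv; rewrite mulrDr; apply: genI_add.
move=> r' v [g' [Hg' ->]]; rewrite mulrCA; apply: genI_mul; apply: genI_gen.
exists (fun i => match split i with inl u => g u | inr v => g' v end); split.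
  by move=> i; case: (split i).
rewrite big_split_ord /=; congr (_ * _); apply: eq_bigr => i _.
  by have -> : split (lshift b i) = inl i := unsplitK (inl _ i).
by have -> : split (rshift a i) = inr i := unsplitK (inr _ i).
Qed.

Lemma powI_S (S : R0 -> Prop) n x : powI S n.+1 x -> powI S n x.
Proof.
apply: (@genI_ind _ (powI S n)); first exact: genI_0.
  by move=> *; apply: genI_add.
move=> r u [g [Hg ->]]; apply: genI_mul; rewrite big_ord_recr /= mulrC.
apply: genI_mul; apply: genI_gen; exists (fun i => g (widen_ord (leqnSn n) i)); split => //.
Qed.

Lemma powI_le (S : R0 -> Prop) a b x : (a <= b)%N -> powI S b x -> powI S a x.
Proof.
move=> /subnKC <-; elim: (b - a)%N => [|c IH]; first by rewrite addn0.
by rewrite addnS => /powI_S.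
Qed.

End Gen.

Section S2.
Variables (K : closedFieldType) (s t : nat).
Local Notation R := {mpoly K[s + t]}.
Variable L : pred 'I_s.

Lemma Wt_prod n (g : 'I_n -> R) : (forall i, Wt L (g i) 1) -> Wt L (\prod_(i < n) g i) n.
Proof.
elim: n g => [|n IH] g Hg; first exact: Wt_any.
rewrite big_ord_recr /=.
have H1 : Wt L (\prod_(i < n) g (widen_ord (leqnSn n) i)) n by apply: IH => i; apply: Hg.
have := Wt_mul H1 (Hg ord_max); rewrite addn1; exact.
Qed.

Lemma genI_Wt (Sx : R -> Prop) n h : (forall x, Sx x -> Wt L x n) -> genI Sx h -> Wt L h n.
Proof.
move=> HS; apply: (@genI_ind _ _ (fun u => Wt L u n)); first exact: Wt_0.
  by move=> *; apply: Wt_add.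
by move=> r x /HS; apply: Wt_mulr.
Qed.

Lemma powI_Wt (Sx : R -> Prop) n h : (forall x, Sx x -> Wt L x 1) -> powI Sx n h -> Wt L h n.
Proof.
move=> HS; apply: genI_Wt => _ [g [Hg ->]]; apply: Wt_prod => i.
exact: genI_Wt (Hg i).
Qed.

Lemma powI_X (Sx : R -> Prop) m : (forall i, L i -> Sx (xv K t i)) -> powI Sx (wL L m) 'X_[m].
Proof.
move=> HS; rewrite mpolyXE_id /wL.
apply: (big_rec2 (fun a x => powI Sx a x)); first exact: powI_0.
move=> k a x _ Hx; rewrite mulnC; apply: powI_mul => //.
case: (eqVneq (eL L k) 0%N) => [->|He]; first by rewrite muln0; apply: powI_0.
have [i Hi Ek] := eL_neq0 He.
rewrite Ek eL_lshift Hi muln1.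
elim: (m (lshift t i)) => [|c IH]; first exact: powI_0.
rewrite exprS -add1n; apply: powI_mul => //; apply: powI_gen1; apply: genI_gen.
exact: HS.
Qed.

Lemma Wt_powI (Sx : R -> Prop) n h : (forall i, L i -> Sx (xv K t i)) -> Wt L h n -> powI Sx n h.
Proof.
move=> HS Hw; rewrite (mpolyE h) big_seq; elim/big_rec: _ => [|m x Hm Px].
  exact: genI_0.
apply: genI_add => //; rewrite -mul_mpolyC; apply: genI_mul.
apply: powI_le (powI_X m HS); apply: Hw; by rewrite -mcoeff_msupp.
Qed.

End S2.

Definition dec (P : Prop) : bool := if excluded_middle_informative P then true else false.
Lemma decP (P : Prop) : dec P <-> P.
Proof. by rewrite /dec; case: excluded_middle_informative. Qed.

Definition Lam (K : closedFieldType) (s t : nat) (p : PR K s t -> Prop) : pred 'I_s :=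
  fun i => dec (p (xv K t i)).

Lemma EordW1 (K : closedFieldType) (s t : nat) (p : PR K s t -> Prop) J m :
  pointW p -> Eord_ge p J m -> forall f, J f -> Wt (Lam p) f m.
Proof.
move=> [[Hid [Hn1 Hpr]] Hy] H f Jf.
have [g [Hg Hgf]] := H f Jf.
have W1 : Wt (Lam p) (g * f) m.
  apply: powI_Wt Hgf => x Hx.
  apply: genI_Wt Hx => _ [i [Hi ->]].
  have := @Wt_X K s t (Lam p) (lshift t i); rewrite eL_lshift.
  by rewrite (_ : Lam p i = true) //; apply/decP.
apply: Wt_cancel W1 _; apply/negP => /eqP H0; apply: Hg.
by apply: ideal_phi0 H0 => // i /decP.
Qed.

Lemma EordW2 (K : closedFieldType) (s t : nat) (p : PR K s t -> Prop) J m :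
  pointW p -> (forall f, J f -> Wt (Lam p) f m) -> Eord_ge p J m.
Proof.
move=> [[Hid [Hn1 Hpr]] Hy] H f Jf; exists 1; split => //; rewrite mul1r.
apply: Wt_powI (H f Jf) => i /decP Hi; apply: genI_gen; by exists i.
Qed.

Lemma sum_mcoeff (K : closedFieldType) n (f : {mpoly K[n]}) m0 :
  \sum_(m <- msupp f) f@_m * (m == m0)%:R = f@_m0.
Proof.
case: (boolP (m0 \in msupp f)) => Hm0.
  rewrite (bigD1_seq m0) ?msupp_uniq //= eqxx mulr1 big1 ?addr0 //.
  by move=> m /negbTE ->; rewrite mulr0.
rewrite big1_seq; last first.
  move=> m Hm; have -> : (m == m0) = false.
    by apply/negbTE; apply: contraNneq Hm0 => <-.
  by rewrite mulr0.
by move: Hm0; rewrite mcoeff_msupp negbK => /eqP ->.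
Qed.

Section Chart.
Variables (K : closedFieldType) (s t : nat) (Iset : {set 'I_s}) (j : 'I_s).
Local Notation R := {mpoly K[s + t]}.
Definition cv (k : 'I_(s+t)) : bool := [exists i in Iset, (i != j) && (k == lshift t i)].
Definition Nc (m : 'X_{1..s+t}) : nat := (\sum_(k < s + t) cv k * m k)%N.
Definition mu (m : 'X_{1..s+t}) : 'X_{1..s+t} := (m + U_(lshift t j) *+ Nc m)%MM.

Lemma cv_j : cv (lshift t j) = false.
Proof.
apply/negbTE/existsP => [[i /andP [_ /andP [Hij /eqP /lshift_inj E]]]].
by rewrite E eqxx in Hij.
Qed.

Lemma chart_X m : chart_map Iset j ('X_[m] : R) = 'X_[mu m].
Proof.
rewrite /chart_map comp_mpolyX.
rewrite (eq_bigr (fun k => 'X_k ^+ m k * xv K t j ^+ (cv k * m k))); last first.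
  move=> k _; rewrite tnth_mktuple /chart_var -/(cv k).
  by case: (cv k); rewrite ?mul1n ?mul0n ?expr0 ?mulr1 // exprMn mulrC.
by rewrite big_split /= prodrXr /mu mpolyXD mpolyXn -mpolyXE_id /Nc.
Qed.

Lemma mu_k m k : k != lshift t j -> mu m k = m k.
Proof.
by move=> Hk; rewrite /mu mnmDE mulmnE mnm1E eq_sym (negbTE Hk) mul0n addn0.
Qed.

Lemma mu_j m : mu m (lshift t j) = (m (lshift t j) + Nc m)%N.
Proof. by rewrite /mu mnmDE mulmnE mnm1E eqxx mul1n. Qed.

Lemma mu_inj : injective mu.
Proof.
move=> m1 m2 E.
have Ek : forall k, k != lshift t j -> m1 k = m2 k.
  by move=> k Hk; rewrite -(mu_k m1 Hk) -(mu_k m2 Hk) E.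
have EN : Nc m1 = Nc m2.
  apply: eq_bigr => k _; case: (eqVneq k (lshift t j)) => [->|Hk].
    by rewrite cv_j !mul0n.
  by rewrite Ek.
apply/mnmP => k; case: (eqVneq k (lshift t j)) => [->|Hk]; last exact: Ek.
by move: (congr1 (fun m : 'X_{1..s+t} => m (lshift t j)) E) => /=; rewrite !mu_j EN => /addIn.
Qed.

Lemma chart_coef (f : R) m : (chart_map Iset j f)@_(mu m) = f@_m.
Proof.
rewrite {1}/chart_map comp_mpolyEX raddf_sum /=.
rewrite (eq_bigr (fun m' => f@_m' * (m' == m)%:R)); first exact: sum_mcoeff.
move=> m' _; rewrite -/(chart_map Iset j ('X_[m'] : R)) chart_X mcoeffZ mcoeffX.
by rewrite (inj_eq mu_inj).
Qed.

Lemma chart_xv i : chart_map Iset j (xv K t i) = @chart_var K s t Iset j (lshift t i).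
Proof. by rewrite /chart_map /xv comp_mpolyXU -tnth_nth tnth_mktuple. Qed.

End Chart.

Lemma weight_bound (K : closedFieldType) (s t : nat) (Iset : {set 'I_s}) (j : 'I_s)
  (xi xi' : PR K s t -> Prop) :
  pointW xi' -> (forall f, xi f <-> xi' (chart_map Iset j f)) ->
  forall m, (@wL s t (Lam xi') (mu Iset j m) <=
             @wL s t (Lam xi) m + eL (Lam xi') (lshift t j) * @wL s t (Lam xi) m)%N.
Proof.
move=> [[[_ [_ PM]] _] _] Hrel m.
have F0 : forall k : 'I_(s+t), (eL (Lam xi') k <= eL (Lam xi) k)%N.
  move=> k; case: (eqVneq (eL (Lam xi') k) 0%N) => [->//|He].
  have [i Hi ->] := eL_neq0 He; rewrite !eL_lshift.
  have -> : Lam xi i = true; last by apply: leq_b1.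
  apply/decP; apply/Hrel; rewrite chart_xv /chart_var.
  move/decP: Hi => Hi; case: ifP => _ //; exact: PM.
have F2 : eL (Lam xi') (lshift t j) != 0%N -> forall k : 'I_(s+t), (cv Iset j k <= eL (Lam xi) k)%N.
  rewrite eL_lshift => Hj k; case: (boolP (cv Iset j k)) => // Hc.
  have := Hc; move=> /existsP [i /andP [HiI /andP [Hij /eqP Ek]]].
  rewrite Ek eL_lshift.
  have -> : Lam xi i = true; last by [].
  apply/decP; apply/Hrel; rewrite chart_xv /chart_var -/(cv Iset j (lshift t i)) -Ek Hc.
  rewrite mulrC; apply: PM; apply/decP.
  by move: Hj; rewrite /Lam; case: (dec _).
rewrite /wL (eq_bigr (fun k => eL (Lam xi') k * m k +
     eL (Lam xi') k * ((lshift t j == k) * Nc Iset j m)))%N; last first.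
  by move=> k _; rewrite /mu mnmDE mulmnE mnm1E mulnDr.
rewrite big_split /=; apply: leq_add.
  by apply: leq_sum => k _; apply: leq_mul.
rewrite (bigD1 (lshift t j)) //= eqxx mul1n big1 ?addn0; last first.
  by move=> k /negbTE; rewrite eq_sym => ->; rewrite mul0n muln0.
case: (eqVneq (eL (Lam xi') (lshift t j)) 0%N) => [->//|He].
rewrite leq_mul2l; apply/orP; right.
by apply: leq_sum => k _; apply: leq_mul => //; apply: F2.
Qed.

Lemma prime_exp (R0 : comNzRingType) (p : R0 -> Prop) x k : is_prime p -> p (x ^+ k) -> p x.
Proof.
move=> [_ [H1 Hpr]]; elim: k => [|k IH]; first by rewrite expr0 => /H1.
by rewrite exprS => /Hpr [//|]; apply: IH.
Qed.

Theorem mainTheorem13 (K : closedFieldType) (s t : nat)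
    (S : PR K s t -> Prop) (xi : PR K s t -> Prop) (theta : nat)
    (Iset : {set 'I_s}) :
  (* P = ideal generated by binomial generators *)
  (forall f, S f -> binomial_gen f) ->
  (* xi is a point of W where Eord(P) = theta > 0 is maximal *)
  pointW xi ->
  (0 < theta)%N ->
  Eord_eq xi (genI S) theta ->
  (forall eta m, pointW eta -> Eord_ge eta (genI S) m -> (m <= theta)%N) ->
  (* Z = {x_i = 0, i in Iset} is contained in Etop(P) *)
  (forall eta, pointW eta -> (forall i, i \in Iset -> eta (xv K t i)) ->
     Eord_eq eta (genI S) theta) ->
  (* for every chart j of the blow-up, every weak transform Pv on that chart
     (P O_{W'} = x_j^theta Pv there), and every point xi' of the chart over xi *)
  forall (j : 'I_s) (Pv : PR K s t -> Prop) (xi' : PR K s t -> Prop),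
    j \in Iset ->
    yequiv (genI (fun g => exists f, genI S f /\ g = chart_map Iset j f))
           (genI (fun g => exists q, Pv q /\ g = xv K t j ^+ theta * q)) ->
    pointW xi' ->
    (forall f, xi f <-> xi' (chart_map Iset j f)) ->
    (* Eord_{xi'}(Pv) <= theta *)
    ~ Eord_ge xi' Pv theta.+1.
Proof.
move=> _ Hxi _ [_ Hnot] _ _ j Pv xi' _ [Hyeq _] Hxi' Hrel HPv.
apply: Hnot; apply: EordW2 Hxi _ => f Hf.
case: (classic (Wt (Lam xi) f theta.+1)) => // HW; exfalso.
have [m Hm] := not_all_ex_not _ _ HW.
have Hfm : f@_m != 0 by case: (f@_m != 0) Hm => //; case.
have Hwm : (@wL s t (Lam xi) m <= theta)%N.
  by rewrite leqNgt; apply/negP => H; apply: Hm.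
have Hc : genI (fun g => exists f, genI S f /\ g = chart_map Iset j f) (chart_map Iset j f).
  by apply: genI_gen; exists f.
have [k Hk] := Hyeq _ Hc.
set e := eL (Lam xi') (lshift t j).
have W1 : Wt (Lam xi') (yprod K s t ^+ k * chart_map Iset j f) (theta * e + theta.+1).
  apply: genI_Wt Hk => _ [q [Hq ->]]; apply: Wt_mul.
    by apply: Wt_exp; apply: Wt_X.
  exact: EordW1 Hxi' HPv q Hq.
have W2 : Wt (Lam xi') (chart_map Iset j f) (theta * e + theta.+1).
  apply: Wt_cancel W1 _; apply/negP => /eqP H0.
  case: Hxi' => [[Hid Hpr] Hy]; apply: Hy.
  apply: (prime_exp (k := k)); first by split.
  by apply: ideal_phi0 H0 => // i /decP.
have := W2 (mu Iset j m); rewrite chart_coef => /(_ Hfm) Hlow.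
have Hup := weight_bound Hxi' Hrel m.
rewrite -/e in Hup.
have : (e * @wL s t (Lam xi) m <= e * theta)%N by apply: leq_mul.
move: Hlow Hup Hwm; lia.
Qed.
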